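(* Let $v\equiv 3$ or $15\pmod{18}$ with $v>3$, and let $S=(\mathbb{Z}_v,\mathcal{B})$ be a cyclic $\mathrm{STS}(v)$ (with cyclic automorphism $i\mapsto i+1\bmod v$). Then $S$ admits a zero-sum $4$-flow. Moreover, if $S$ has a full orbit of Type $1$ or of Type $3$, then $S$ admits a zero-sum $3$-flow.
   Context: A Steiner triple system $\mathrm{STS}(v)$ is a pair $(X,\mathcal{B})$ with $|X|=v$ and $\mathcal{B}$ a collection of 3-subsets of $X$ such that every 2-subset lies in exactly one block. It is cyclic if (after relabeling) $X=\mathbb{Z}_v$ and $\alpha:i\mapsto i+1\pmod v$ maps blocks to blocks. Blocks are partitioned into orbits under $\langle\alpha\rangle$; an orbit of size $v$ is a full orbit, and for $v\equiv3\pmod6$ there is exactly one other (short) orbit, that of $\{0,v/3,2v/3\}$. When $3\mid v$, an orbit is of Type $i$ ($i=1,2,3$) if each of its blocks contains elements of exactly $i$ distinct residue classes mod $3$. For integer $n\ge2$, a zero-sum $n$-flow is a map $f:\mathcal{B}\to\{\pm1,\ldots,\pm(n-1)\}$ with $\sum_{B\ni x} f(B)=0$ for every point $x$. *)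

(* Defs.v *)
(* Points of the STS are 'I_v (integers mod v), and the
   cyclic automorphism alpha : i |-> i+1 mod v is fintype's [ordS]. *)
From mathcomp Require Import all_boot all_order all_algebra.
Set Implicit Arguments. Unset Strict Implicit. Unset Printing Implicit Defensive.
Import Order.TTheory GRing.Theory Num.Theory.

Definition shift (v : nat) (B : {set 'I_v}) : {set 'I_v} := [set ordS x | x in B].

Definition is_STS (v : nat) (Bs : {set {set 'I_v}}) : Prop :=
  (forall B, B \in Bs -> #|B| = 3%N) /\
  (forall x y : 'I_v, x != y -> #|[set B in Bs | (x \in B) && (y \in B)]| = 1%N).

Definition is_cyclic (v : nat) (Bs : {set {set 'I_v}}) : Prop :=
  forall B, B \in Bs -> shift B \in Bs.

Definition zero_sum_flow (v n : nat) (Bs : {set {set 'I_v}})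
  (f : {set 'I_v} -> int) : Prop :=
  (forall B, B \in Bs -> (f B != 0%R) && (`|f B|%N < n)%N) /\
  (forall x : 'I_v, (\sum_(B in Bs | x \in B) f B)%R = 0%R).

Definition block_orbit (v : nat) (B : {set 'I_v}) : {set {set 'I_v}} :=
  [set iter k (@shift v) B | k : 'I_v].

Definition ntype (v : nat) (B : {set 'I_v}) : nat :=
  size (undup [seq (val x %% 3)%N | x <- enum B]).

Definition orbit_of_type (v : nat) (B : {set 'I_v}) (i : nat) : Prop :=
  forall C, C \in block_orbit B -> ntype C = i.

(* Main.v *)
Require Import Defs.
From mathcomp Require Import all_boot all_order all_algebra zify ring.
Set Implicit Arguments. Unset Strict Implicit. Unset Printing Implicit Defensive.
Import Order.TTheory GRing.Theory Num.Theory.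

Lemma card3g (T : finType) (a b c : T) : a != b -> a != c -> b != c -> #|[set a; b; c]| = 3%N.
Proof. move=> ab ac bc. by rewrite setUC cardsU1 cards2 !inE ab negb_or ![c == _]eq_sym ac bc. Qed.

Lemma fix3 (T : finType) (s : T -> T) (A : {set T}) :
  (forall x, x \in A -> s x \in A) -> (forall x, s (s (s x)) = x) ->
  (forall x, x \in A -> s x != x) -> (3 %| #|A|)%N.
Proof.
move=> + s3.
have [k] := ubnP #|A|; elim: k A => // k IH A Ak sA sfix.
case: (set_0Vmem A) => [->|[x xA]]; first by rewrite cards0.
set O := [set x; s x; s (s x)].
have sx : s x != x := sfix x xA.
have ssx : s (s x) != s x := sfix _ (sA _ xA).
have ssx2 : s (s x) != x.
  by apply: contraNneq sx => e; rewrite -[X in _ == X](s3 x) e.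
have OA : O \subset A.
  apply/subsetP => y; rewrite !inE => /orP [/orP [] |] /eqP ->; by rewrite ?sA.
have cO : #|O| = 3%N by rewrite card3g // eq_sym.
have back y : s y \in O -> y \in O.
  by rewrite !inE => /orP [/orP [] |] /eqP e; rewrite -(s3 y) e ?s3 ?eqxx ?orbT.
have cA := cardsID O A; rewrite (setIidPr OA) cO in cA.
have : (3 %| #|A :\: O|)%N.
  apply: IH.
  - by move: Ak; rewrite -cA; lia.
  - move=> y; rewrite !in_setD => /andP [yO yA]; rewrite sA // andbT.
    by apply: contra yO; apply: back.
  - by move=> y; rewrite in_setD => /andP [_ yA]; apply: sfix.
by rewrite -cA dvdn_addr.
Qed.

Section Gen.
Variable n : nat.
Local Notation N := n.+2.
Local Notation pt := 'I_N.
Local Open Scope ring_scope.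

Definition tr (t : pt) (B : {set pt}) : {set pt} := [set x + t | x in B].

Lemma mem_tr t B x : (x \in tr t B) = (x - t \in B).
Proof.
apply/imsetP/idP => [[y yB ->]|xB]; first by rewrite addrK.
by exists (x - t) => //; rewrite subrK.
Qed.

Lemma tr0 B : tr 0 B = B.
Proof. by apply/setP => x; rewrite mem_tr subr0. Qed.

Lemma trD s t B : tr s (tr t B) = tr (t + s) B.
Proof. by apply/setP => x; rewrite !mem_tr opprD addrA [X in _ = (X \in _)]addrAC. Qed.

Lemma trK t B : tr (- t) (tr t B) = B.
Proof. by rewrite trD subrr tr0. Qed.

Lemma tr_inj t : injective (tr t).
Proof. by move=> A B E; rewrite -(trK t A) E trK. Qed.

Lemma card_tr t B : #|tr t B| = #|B|.
Proof. by apply: card_imset; apply: addIr. Qed.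

Lemma trC s t B : tr s (tr t B) = tr t (tr s B).
Proof. by rewrite !trD addrC. Qed.

Lemma ordS_add1 (x : pt) : ordS x = x + 1.
Proof.
by apply: val_inj => /=; rewrite /ordS /= modnDmr addn1.
Qed.

Lemma shift_tr B : shift B = tr 1 B.
Proof. by apply: eq_imset => x; rewrite ordS_add1. Qed.

Variable Bs : {set {set pt}}.
Hypothesis Hsts : is_STS Bs.
Hypothesis Hcyc : is_cyclic Bs.

Lemma cardB B : B \in Bs -> #|B| = 3%N.
Proof. by case: Hsts => H _; apply: H. Qed.

Lemma tr_nat k B : B \in Bs -> tr k%:R B \in Bs.
Proof.
elim: k => [|k IH] BB; first by rewrite tr0.
by rewrite -[k.+1]addn1 natrD -trD -shift_tr; apply: Hcyc; apply: IH.
Qed.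

Lemma trBs t B : B \in Bs -> tr t B \in Bs.
Proof. by move=> BB; rewrite -(natr_Zp t); apply: tr_nat. Qed.

Lemma trBsE t B : (tr t B \in Bs) = (B \in Bs).
Proof.
apply/idP/idP; last exact: trBs.
by move=> h; rewrite -(trK t B); apply: trBs.
Qed.

Lemma sts_ex x y : x != y -> exists2 B, B \in Bs & (x \in B) && (y \in B).
Proof.
case: Hsts => _ H /H /eqP /cards1P [B EB].
have : B \in [set B in Bs | (x \in B) && (y \in B)] by rewrite EB set11.
by rewrite inE => /andP [] ?; exists B.
Qed.

Lemma sts_uniq x y B C : x != y -> B \in Bs -> C \in Bs ->
  x \in B -> y \in B -> x \in C -> y \in C -> B = C.
Proof.
case: Hsts => _ H /H /eqP /cards1P [D ED] BB CB xB yB xC yC.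
have : B \in [set B in Bs | (x \in B) && (y \in B)] by rewrite inE BB xB yB.
have : C \in [set B in Bs | (x \in B) && (y \in B)] by rewrite inE CB xC yC.
by rewrite ED !inE => /eqP -> /eqP ->.
Qed.

Lemma count_pair (p q : pt) (c : int) : q != p ->
  \sum_(B in Bs) (if (p \in B) && (q \in B) then c else 0) = c.
Proof.
move=> qp; rewrite -big_mkcondr /=.
have pq : p != q by rewrite eq_sym.
rewrite (eq_bigl (fun B => B \in [set B in Bs | (p \in B) && (q \in B)])); last first.
  by move=> B; rewrite inE.
by rewrite sumr_const; case: Hsts => _ H; rewrite (H _ _ pq).
Qed.

Lemma pair_sum (g : pt -> pt -> int) :
  \sum_(B in Bs) \sum_(p in B) \sum_(q in B | q != p) g p q
  = \sum_p \sum_(q | q != p) g p q.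
Proof.
transitivity (\sum_(B in Bs) \sum_p \sum_(q | q != p)
   (if (p \in B) && (q \in B) then g p q else 0)).
  apply: eq_bigr => B _; rewrite [RHS](bigID (fun p => p \in B)) /=.
  rewrite [X in _ = _ + X]big1 ?addr0; last first.
    by move=> p /negbTE pB; apply: big1 => q _; rewrite pB.
  apply: eq_bigr => p pB; rewrite big_mkcondl /=.
  by apply: eq_bigr => q _; rewrite pB.
rewrite exchange_big /=; apply: eq_bigr => p _.
rewrite exchange_big /=; apply: eq_bigr => q qp.
exact: count_pair.
Qed.

Definition S (f : {set pt} -> int) x := \sum_(B in Bs | x \in B) f B.

Lemma S_inv f : (forall t B, B \in Bs -> f (tr t B) = f B) ->
  forall x, S f x = S f 0.
Proof.
move=> Hf x; rewrite /S (reindex_inj (@tr_inj x)) /=.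
apply: eq_big => [B|B /andP [+ _]]; last by rewrite trBsE; apply: Hf.
by rewrite trBsE mem_tr subrr.
Qed.

Lemma triple_sum (F : {set pt} -> int) :
  \sum_(B in Bs | 0 \in B) \sum_(y in B) F (tr (- y) B)
  = (\sum_(C in Bs | 0 \in C) F C) *+ 3.
Proof.
transitivity (\sum_y \sum_C
   (if (C \in Bs) && (0 \in C) && (- y \in C) then F C else 0)).
  rewrite (eq_bigr (fun B : {set pt} => \sum_y if y \in B then F (tr (- y) B) else 0));
    last by move=> B _; rewrite big_mkcond.
  rewrite exchange_big /=; apply: eq_bigr => y _.
  rewrite (reindex_inj (@tr_inj y)) /= big_mkcond /=; apply: eq_bigr => C _.
  rewrite trBsE !mem_tr sub0r subrr trK.
  by case: (C \in Bs); case: (0 \in C); case: (- y \in C).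
rewrite exchange_big /= -sumrMnl [RHS]big_mkcond /=; apply: eq_bigr => C _.
case: ifP => [/andP [CB C0]|_]; last by apply: big1.
rewrite -big_mkcond /= sumr_const.
have -> : #|[pred y | - y \in C]| = 3%N.
  rewrite -(cardB CB) -(card_image (@oppr_inj _)).
  apply: eq_card => y.
  apply/imageP/idP => [[x xP ->]|yC]; first by rewrite inE in xP.
  by exists (- y); rewrite ?inE opprK.
by [].
Qed.

Hypothesis hN18 : (N %% 18 = 3 \/ N %% 18 = 15)%N.
Hypothesis hN3 : (3 < N)%N.

Definition m := (N %/ 3)%N.
Lemma Nm : N = (3 * m)%N. Proof. rewrite /m; lia. Qed.
Lemma m5 : (5 <= m)%N. Proof. rewrite /m; lia. Qed.
Lemma Nodd : (N %% 2 = 1)%N. Proof. lia. Qed.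

Lemma val_add (x y : pt) : val (x + y) = ((val x + val y) %% N)%N.
Proof. by []. Qed.
Lemma val_opp (x : pt) : val (- x) = ((N - val x) %% N)%N.
Proof. by []. Qed.
Lemma val_mulrn (x : pt) k : val (x *+ k) = ((val x * k) %% N)%N.
Proof. by rewrite Zp_mulrn. Qed.

Lemma mod_cases (a k : nat) : (a < k * N)%N ->
  exists2 q, (q < k)%N & a = (q * N + a %% N)%N.
Proof. by move=> h; exists (a %/ N)%N; [rewrite ltn_divLR | exact: divn_eq]. Qed.

Definition mm : pt := m%:R.
Lemma val_mm : val mm = m.
Proof. rewrite /mm Zp_nat /= modn_small //; have := Nm; have := m5; lia. Qed.

Lemma mm3 : mm + mm + mm = 0.
Proof.
apply: val_inj; rewrite !val_add val_mm /=.
rewrite (modn_small (_ : m + m < N)%N); last by have := Nm; have := m5; lia.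
by rewrite (_ : (m + m + m = N)%N) ?modnn //; have := Nm; lia.
Qed.

Lemma mm_neq0 : mm != 0.
Proof. by apply/eqP => /(congr1 val); rewrite val_mm /=; have := m5; lia. Qed.

Lemma twice0 (t : pt) : t + t = 0 -> t = 0.
Proof.
move/(congr1 val); rewrite val_add /= => h; apply: val_inj => /=.
have hlt : (t + t < 2 * N)%N by have := ltn_ord t; lia.
have [q q2 e] := mod_cases hlt.
move: q2 e; rewrite h; have := Nodd; case: q => [|[|q]] //=; lia.
Qed.

Lemma thrice0 (t : pt) : t + t + t = 0 -> t != 0 -> t = mm \/ t = mm + mm.
Proof.
move/(congr1 val); rewrite !val_add /= modnDml => h tn0.
have tv : (t : nat) != 0%N by apply: contra tn0 => /eqP e; apply/eqP/val_inj.
have hlt : (t + t + t < 3 * N)%N by have := ltn_ord t; lia.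
have [q q3 e] := mod_cases hlt.
move: q3 e; rewrite h; have := Nm; case: q => [|[|[|q]]] //= NE _ E.
- by move: tv; lia.
- by left; apply: val_inj; rewrite val_mm /=; lia.
- right; apply: val_inj; rewrite val_add val_mm modn_small /=; lia.
Qed.

Definition shortf (B : {set pt}) := [exists t : pt, (t != 0) && (tr t B == B)].

Lemma card3 (a b c : pt) : a != b -> a != c -> b != c -> #|[set a; b; c]| = 3%N.
Proof. move=> ab ac bc. by rewrite setUC cardsU1 cards2 !inE ab negb_or ![c == _]eq_sym ac bc. Qed.

Lemma set3 (B : {set pt}) a b c : #|B| = 3%N -> a \in B -> b \in B -> c \in B ->
  a != b -> a != c -> b != c -> B = [set a; b; c].
Proof.
move=> cB aB bB cB' ab ac bc; apply/esym/eqP; rewrite eqEcard card3 // cB leqnn andbT.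
by apply/subsetP => x; rewrite !inE => /orP [/orP [] |] /eqP ->.
Qed.

Lemma addr_neq (x a b : pt) : a != b -> x + a != x + b.
Proof. by rewrite (inj_eq (@addrI _ x)). Qed.

Lemma short3 (B : {set pt}) (x : pt) : #|B| = 3%N -> shortf B -> x \in B ->
  B = [set x; x + mm; x + mm + mm].
Proof.
move=> cB /existsP [t /andP [t0 /eqP E]] xB.
have Sy y : y \in B -> y + t \in B by move=> yB; rewrite -E mem_tr addrK.
have x1 := Sy _ xB; have x2 := Sy _ x1; have x3 := Sy _ x2.
have t2 : t + t != 0 by apply: contra t0 => /eqP /twice0 ->.
have d01 : x != x + t by rewrite -{1}[x]addr0 addr_neq // eq_sym.
have d02 : x != x + t + t by rewrite -{1}[x]addr0 -addrA addr_neq // eq_sym.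
have d12 : x + t != x + t + t by rewrite -{1}[x + t]addr0 addr_neq // eq_sym.
have EB := set3 cB xB x1 x2 d01 d02 d12.
have t3 : t + t + t = 0.
  move: x3; rewrite {1}EB !inE => /orP [/orP [] |] /eqP h.
  - by apply: (@addrI _ x); rewrite ?addrA addr0.
  - have : t + t = 0 by apply: (@addrI _ (x + t)); rewrite ?addrA addr0.
    by move=> h'; rewrite h' eqxx in t2.
  - have : t = 0 by apply: (@addrI _ (x + t + t)); rewrite ?addrA addr0.
    by move=> h'; rewrite h' eqxx in t0.
case: (thrice0 t3 t0) => et; rewrite EB et //.
have -> : x + (mm + mm) + (mm + mm) = x + mm + (mm + mm + mm) by ring.
rewrite mm3 addr0 (_ : x + (mm + mm) = x + mm + mm); last by ring.
by apply/setP => y; rewrite !inE orbAC.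
Qed.

Lemma shortf_tr s B : shortf (tr s B) = shortf B.
Proof.
apply/existsP/existsP => [[t /andP [t0 /eqP E]]|[t /andP [t0 /eqP E]]];
  exists t; rewrite t0 /=; apply/eqP.
- by apply: (@tr_inj s); rewrite trC.
- by rewrite trC E.
Qed.

Lemma sum_cond_const (B : {set pt}) p (c : int) :
  \sum_(q in B | q != p) c = c *+ #|B :\ p|.
Proof. by rewrite -sumr_const; apply: eq_bigl => q; rewrite !inE andbC. Qed.

Lemma countBs : (#|Bs| * 6 = N * (N - 1))%N.
Proof.
have := pair_sum (fun _ _ => 1).
rewrite (eq_bigr (fun B => 6%:R)); last first.
  move=> B BB; rewrite (eq_bigr (fun p => 2%:R)); last first.
    move=> p pB; have e : #|B :\ p| = 2%N.
      by have := cardsD1 p B; rewrite pB cardB //= => e; lia.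
    by rewrite sum_cond_const e.
  by rewrite sumr_const cardB.
rewrite [X in _ = X -> _](eq_bigr (fun p => (N - 1)%:R)); last first.
  move=> p _; rewrite (eq_bigl (fun q => q \in [set~ p])); last by move=> q; rewrite !inE.
  by rewrite sumr_const cardsC1 card_ord subn1.
rewrite !sumr_const card_ord => h; lia.
Qed.

Lemma short_ex : exists2 B, B \in Bs & shortf B.
Proof.
case: (boolP [exists B in Bs, shortf B]) => [/existsP [B /andP [BB sB]]|H].
  by exists B.
exfalso.
have h3 : (3 %| #|Bs|)%N.
  apply: (@fix3 _ (tr mm)) => [B BB|B|B BB]; first exact: trBs.
    by rewrite !trD ?addrA mm3 tr0.
  apply: contra H => /eqP E; apply/existsP; exists B; rewrite BB /=.
  by apply/existsP; exists mm; rewrite mm_neq0 E /=.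
move/dvdnP: h3 => [k Ek]; have := countBs; rewrite Ek; nia.
Qed.

Lemma short_pt x : #|[set B in Bs | (x \in B) && shortf B]| = 1%N.
Proof.
have [B0 B0B sB0] := short_ex.
have [y yB0] : exists y, y \in B0.
  by apply/set0Pn; rewrite -card_gt0 cardB.
apply/eqP/cards1P; exists (tr (x - y) B0); apply/setP => C; rewrite !inE.
apply/andP/eqP => [[CB /andP [xC sC]]|->].
  rewrite (short3 (cardB CB) sC xC) (short3 _ _ (_ : x \in tr (x - y) B0)) //.
  - by rewrite card_tr cardB.
  - by rewrite shortf_tr.
  - by rewrite mem_tr opprB addrC subrK.
by rewrite trBs // mem_tr opprB addrC subrK yB0 shortf_tr.
Qed.

Lemma free (B : {set pt}) s t : ~~ shortf B -> tr s B = tr t B -> s = t.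
Proof.
move=> ns E; apply/eqP; rewrite -subr_eq0; apply: contraNT ns => st.
apply/existsP; exists (s - t); rewrite st /=; apply/eqP.
by rewrite -[RHS](trK t) -E trD.
Qed.

Definition code (C : {set pt}) := val (enum_rank C).
Definition leader (C : {set pt}) := [forall y in C, (code C <= code (tr (- y) C))%N].

Lemma leader_ex (B : {set pt}) x0 : x0 \in B -> exists2 y, y \in B & leader (tr (- y) B).
Proof.
move=> x0B; case: (arg_minnP (fun y => code (tr (- y) B)) x0B) => y yB ymin.
exists y => //; apply/forallP => z; apply/implyP; rewrite mem_tr opprK => zB.
by rewrite trD (_ : - y + - z = - (z + y)) ?ymin //; ring.
Qed.

Lemma leader_uniq (B : {set pt}) y z : ~~ shortf B -> y \in B -> z \in B ->
  leader (tr (- y) B) -> leader (tr (- z) B) -> y = z.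
Proof.
move=> ns yB zB /forallP Ly /forallP Lz.
have := Ly (z - y); rewrite mem_tr opprK subrK zB /= trD (_ : - y + - (z - y) = - z); last by ring.
have := Lz (y - z); rewrite mem_tr opprK subrK yB /= trD (_ : - z + - (y - z) = - y); last by ring.
move=> h1 h2; have : code (tr (- y) B) = code (tr (- z) B) by apply/eqP; rewrite eqn_leq h1 h2.
move/val_inj/enum_rank_inj/(free ns); exact: oppr_inj.
Qed.

Lemma sumr_split (f1 f2 : {set pt} -> int) x : S (fun B => f1 B + f2 B) x = S f1 x + S f2 x.
Proof. by rewrite /S big_split. Qed.

Definition res (x : pt) := (val x %% 3)%N.

Lemma d3N : (3 %| N)%N.
Proof. by apply/dvdnP; exists m; rewrite {1}Nm mulnC. Qed.

Lemma res_sub (x a : pt) : res (x - a) = ((val x + N - val a) %% 3)%N.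
Proof.
rewrite /res val_add val_opp modn_dvdm ?d3N // -modnDmr modn_dvdm ?d3N //.
rewrite modnDmr addnBA //; exact: ltnW (ltn_ord a).
Qed.

Lemma res_sub_inj (x a b : pt) : res (x - a) = res (x - b) -> res a = res b.
Proof.
rewrite !res_sub /res => h.
have la : (val a < N)%N := ltn_ord a; have lb : (val b < N)%N := ltn_ord b.
have := Nm; lia.
Qed.

Lemma res_lt3 x : (res x < 3)%N.
Proof. by rewrite /res ltn_mod. Qed.

Section Flow.
Variable B' : {set pt}.
Hypothesis hB' : B' \in Bs.
Hypothesis hns : ~~ shortf B'.
Variable psi : {set pt} -> int.
Variables al be u : int.

Definition O := [set tr t B' | t in [set: pt]].
Definition idx (B : {set pt}) := odflt 0 [pick t | tr t B' == B].

Lemma idx_tr t : idx (tr t B') = t.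
Proof.
rewrite /idx; case: pickP => [s /eqP E|H] /=; first exact: free hns E.
by have := H t; rewrite eqxx.
Qed.

Lemma O_tr s (B : {set pt}) : (tr s B \in O) = (B \in O).
Proof.
apply/imsetP/imsetP => [[t _ E]|[t _ ->]].
  by exists (t - s); rewrite ?inE // -[B](trK s) E trD.
by exists (t + s); rewrite ?inE // trD.
Qed.

Lemma O_Bs (B : {set pt}) : B \in O -> B \in Bs.
Proof. by case/imsetP => t _ ->; apply: trBs. Qed.

Lemma O_ns (B : {set pt}) : B \in O -> ~~ shortf B.
Proof. by case/imsetP => t _ ->; rewrite shortf_tr. Qed.

Definition L := [set C in Bs | (0 \in C) && (C \notin O) && ~~ shortf C && leader C].
Definition F (C : {set pt}) := if C \in L then psi C else 0.
Definition fr (B : {set pt}) := \sum_(y in B) F (tr (- y) B).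
Definition w r := if r == 0%N then al else be.
Definition fO (B : {set pt}) := if B \in O then w (res (idx B)) else 0.
Definition fs (B : {set pt}) := if shortf B then u else 0.
Definition f (B : {set pt}) := fO B + fs B + fr B.

Lemma fr_tr t (B : {set pt}) : fr (tr t B) = fr B.
Proof.
rewrite /fr (reindex_inj (addIr t)) /=; apply: eq_big => [z|z _].
  by rewrite mem_tr addrK.
by rewrite trD (_ : t + - (z + t) = - z) //; ring.
Qed.

Lemma S_fr x : S fr x = (\sum_(C in L) psi C) *+ 3.
Proof.
rewrite (S_inv (fun t B _ => fr_tr t B)) /S /fr triple_sum; congr (_ *+ 3).
rewrite /F -big_mkcondr /=; apply: eq_bigl => C.
by rewrite /L !inE; case: (C \in Bs); case: (0 \in C).
Qed.

Lemma S_fs x : S fs x = u.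
Proof.
rewrite /S /fs -big_mkcondr /=.
rewrite (eq_bigl (fun B => B \in [set B in Bs | (x \in B) && shortf B])); last first.
  by move=> B; rewrite inE andbA.
by rewrite sumr_const short_pt.
Qed.

Lemma S_fO x : S fO x = \sum_(a in B') w (res (x - a)).
Proof.
rewrite /S /fO -big_mkcondr /=.
rewrite (eq_bigl (fun B => (B \in O) && (x \in B))); last first.
  move=> B; apply/idP/idP => [/andP [/andP [_ xB] BO]|/andP [BO xB]].
    by rewrite BO xB.
  by rewrite (O_Bs BO) xB BO.
rewrite big_mkcondr /O big_imset /=; last by move=> s t _ _; apply: free hns.
rewrite (reindex_inj (@subrI _ x)) /= [RHS]big_mkcond /=.
apply: eq_big => [a|a _]; first by rewrite inE.
by rewrite mem_tr idx_tr subKr.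
Qed.

Lemma S_f x : S f x = \sum_(a in B') w (res (x - a)) + u + (\sum_(C in L) psi C) *+ 3.
Proof. by rewrite /f /S !big_split /= -/(S fO x) -/(S fs x) -/(S fr x) S_fO S_fs S_fr. Qed.

Lemma inL C : (C \in L) = [&& C \in Bs, 0 \in C, C \notin O, ~~ shortf C & leader C].
Proof. by rewrite inE !andbA. Qed.

Lemma f_cases B : B \in Bs ->
  [\/ f B = al, f B = be, f B = u | exists2 C, C \in L & f B = psi C].
Proof.
move=> BB; rewrite /f /fO /fs.
case: (boolP (B \in O)) => BO.
  have -> : fr B = 0.
    apply: big1 => y yB; rewrite /F ifF //.
    by rewrite inL O_tr BO /= !andbF.
  rewrite (negbTE (O_ns BO)) /w addr0 addr0.
  by case: ifP => _; [constructor 1 | constructor 2].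
case: (boolP (shortf B)) => sB.
  have -> : fr B = 0.
    apply: big1 => y yB; rewrite /F ifF //.
    by rewrite inL shortf_tr sB /= !andbF.
  by rewrite add0r addr0; constructor 3.
have [x0 x0B] : exists x0, x0 \in B by apply/set0Pn; rewrite -card_gt0 cardB.
have [y0 y0B Ly0] := leader_ex x0B.
rewrite !add0r; constructor 4; exists (tr (- y0) B).
  by rewrite inL trBs // mem_tr sub0r opprK y0B O_tr BO shortf_tr sB.
rewrite /fr (bigD1 y0) //= big1 ?addr0.
  by rewrite /F ifT // inL trBs // mem_tr sub0r opprK y0B O_tr BO shortf_tr sB.
move=> y /andP [yB yn]; rewrite /F ifF //; apply/negP; rewrite inL.
by case/and5P => _ _ _ _ Ly; move/eqP: yn; apply; apply: leader_uniq sB yB y0B Ly Ly0.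
Qed.

Lemma w3 (r1 r2 r3 : nat) : (r1 < 3)%N -> (r2 < 3)%N -> (r3 < 3)%N ->
  r1 != r2 -> r1 != r3 -> r2 != r3 -> w r1 + w r2 + w r3 = al + be + be.
Proof.
by move: r1 r2 r3 => [|[|[|?]]] [|[|[|?]]] [|[|[|?]]] //= _ _ _ _ _ _; rewrite /w /=; ring.
Qed.

Lemma setD3 (B : {set pt}) : #|B| = 3%N ->
  exists a b c, [/\ a \notin [set b; c], b != c & B = a |: [set b; c]].
Proof.
move=> cB; have [a aB] : exists a, a \in B by apply/set0Pn; rewrite -card_gt0 cB.
have : #|B :\ a| == 2%N by have := cardsD1 a B; rewrite aB cB /= => e; apply/eqP; lia.
case/cards2P => b [c [bc E]]; exists a, b, c; split => //.
  by rewrite -E !inE eqxx.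
by rewrite -E setD1K.
Qed.

Lemma sum_res x : #|B'| = 3%N -> {in B' &, injective res} ->
  \sum_(a in B') w (res (x - a)) = al + be + be.
Proof.
move=> cB rinj; have [a [b [c [anb bc E]]]] := setD3 cB.
have aB : a \in B' by rewrite E !inE eqxx.
have bB : b \in B' by rewrite E !inE eqxx orbT.
have cB' : c \in B' by rewrite E !inE eqxx !orbT.
have ab : a != b by apply: contraNneq anb => ->; rewrite !inE eqxx.
have ac : a != c by apply: contraNneq anb => ->; rewrite !inE eqxx orbT.
have D p q : p \in B' -> q \in B' -> p != q -> res (x - p) != res (x - q).
  by move=> pB qB; apply: contra => /eqP /res_sub_inj /rinj -> //.
rewrite E big_setU1 //= big_setU1 ?inE //= big_set1 addrA.
by apply: w3; rewrite ?res_lt3 ?D.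
Qed.

End Flow.

Lemma parity (T : finType) (A : {set T}) : exists psi : T -> int,
  (forall x, x \in A -> psi x = 1 \/ psi x = -1) /\
  (\sum_(x in A) psi x = 0 \/ \sum_(x in A) psi x = 1).
Proof.
have [k] := ubnP #|A|; elim: k A => // k IH A Ak.
case: (set_0Vmem A) => [->|[x xA]].
  by exists (fun _ => 1); split; [move=> y; rewrite inE | left; rewrite big_set0].
have [psi [H1 H2]] : exists psi : T -> int,
  (forall y, y \in A :\ x -> psi y = 1 \/ psi y = -1) /\
  (\sum_(y in A :\ x) psi y = 0 \/ \sum_(y in A :\ x) psi y = 1).
  by apply: IH; move: Ak; rewrite (cardsD1 x A) xA; lia.
pose c : int := if \sum_(y in A :\ x) psi y == 0 then 1 else -1.
exists (fun y => if y == x then c else psi y); split.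
  move=> y yA; case: eqP => [_|/eqP yx]; first by rewrite /c; case: ifP; auto.
  by apply: H1; rewrite !inE yx yA.
rewrite (bigD1 x) //= eqxx.
rewrite (eq_big (fun y => y \in A :\ x) psi); first last.
- by move=> y /andP [_ /negbTE ->].
- by move=> y; rewrite !inE andbC.
rewrite /c; case: H2 => ->; rewrite ?eqxx; first by right.
by left.
Qed.
Lemma sum_mod3 k r : (r < 3)%N -> (\sum_(0 <= i < 3 * k) ((i %% 3 == r) : nat) = k)%N.
Proof.
move=> r3; elim: k => [|k IH]; first by rewrite muln0 big_geq.
rewrite mulnSr addn3 !big_nat_recr //= IH.
have e0 : ((3 * k) %% 3 = 0)%N by lia.
have e1 : ((3 * k).+1 %% 3 = 1)%N by lia.
have e2 : ((3 * k).+2 %% 3 = 2)%N by lia.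
by rewrite e0 e1 e2; move: r3 IH; case: r => [|[|[|]]] //= _ _; lia.
Qed.

Lemma count_res r : (r < 3)%N -> #|[set q : pt | res q == r]| = m.
Proof.
move=> r3; rewrite -sum1dep_card big_mkcond /=.
have := sum_mod3 m r3; rewrite -Nm big_mkord => <-.
by apply: eq_bigr => i _; rewrite /res; case: (_ == r).
Qed.

Lemma card_res p : #|[set q : pt | (q != p) && (res q == res p)]| = (m - 1)%N.
Proof.
have := cardsD1 p [set q : pt | res q == res p]; rewrite count_res ?res_lt3 // inE eqxx /= => e.
rewrite (_ : [set q | _] = [set q : pt | res q == res p] :\ p); first lia.
by apply/setP => q; rewrite !inE.
Qed.

Definition eps (B : {set pt}) : int :=
  \sum_(p in B) \sum_(q in B | q != p) (nat_of_bool (res p == res q))%:R.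

Lemma sum_eps : \sum_(B in Bs) eps B = (N * (m - 1))%:R.
Proof.
rewrite /eps pair_sum.
rewrite (eq_bigr (fun p => (m - 1)%:R)); last first.
  move=> p _; rewrite (eq_bigr (fun q => if res q == res p then 1 else 0)); last first.
    by move=> q _; rewrite eq_sym; case: (_ == _).
  rewrite -big_mkcondr (eq_bigl (fun q => q \in [set q : pt | (q != p) && (res q == res p)])).
    by rewrite sumr_const card_res.
  by move=> q; rewrite inE.
by rewrite sumr_const card_ord [RHS]natrM [RHS]mulrC mulr_natr.
Qed.

Lemma eps_ge2 (B : {set pt}) p q : p \in B -> q \in B -> p != q -> res p = res q -> 2 <= eps B.
Proof.
move=> pB qB pq r.
have G0 x : 0 <= \sum_(y in B | y != x) (nat_of_bool (res x == res y))%:R :> int.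
  by apply: sumr_ge0 => y _; rewrite ler0n.
have G1 x y : x \in B -> y \in B -> y != x -> res x = res y ->
  1 <= \sum_(z in B | z != x) (nat_of_bool (res x == res z))%:R :> int.
  move=> xB yB yx rxy; rewrite (bigD1 y) /=; last by rewrite yB yx.
  rewrite rxy eqxx /= -[1]addr0 lerD //.
  by apply: sumr_ge0 => z _; rewrite ler0n.
rewrite /eps (bigD1 p) //= [X in _ <= _ + X](bigD1 q) /=; last by rewrite qB eq_sym.
have qp : q != p by rewrite eq_sym.
have h1 := G1 p q pB qB qp r.
have h2 := G1 q p qB pB pq (esym r).
set R := (X in _ <= _ + (_ + X)).
have h3 : 0 <= R by apply: sumr_ge0 => i _; apply: G0.
by rewrite (_ : 2 = 1 + (1 + 0)) //; apply: lerD => //; apply: lerD.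
Qed.

Lemma eps_ge0 (B : {set pt}) : 0 <= eps B.
Proof. by apply: sumr_ge0 => p _; apply: sumr_ge0 => q _; rewrite ler0n. Qed.

Lemma eps_nz (B : {set pt}) : eps B != 0 -> 2 <= eps B.
Proof.
case: (boolP [exists p in B, exists q in B, (q != p) && (res p == res q)]).
  case/existsP => p /andP [pB /existsP [q /andP [qB /andP [qp /eqP r]]]] _.
  by apply: eps_ge2 pB qB _ r; rewrite eq_sym.
move/existsPn => H; rewrite /eps big1 ?eqxx // => p pB; apply: big1 => q /andP [qB qp].
move: (H p); rewrite pB /= => /existsPn /(_ q); rewrite qB qp /= => /negbTE -> //.
Qed.

Lemma eps0_inj (B : {set pt}) : eps B = 0 -> {in B &, injective res}.
Proof.
move=> e p q pB qB r; apply/eqP; apply/negPn/negP => pq.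
by have := eps_ge2 pB qB pq r; rewrite e.
Qed.

Lemma eps6 (B : {set pt}) : #|B| = 3%N -> {in B &, forall p q, res p = res q} -> eps B = 6.
Proof.
move=> cB H; rewrite /eps (eq_bigr (fun p => 2%:R)) ?sumr_const ?cB //.
move=> p pB; rewrite (eq_bigr (fun q => 1)); last first.
  by move=> q /andP [qB _]; rewrite (H p q pB qB) eqxx.
have e : #|B :\ p| = 2%N by have := cardsD1 p B; rewrite pB cB /= => e; lia.
by rewrite sum_cond_const e.
Qed.

Lemma card_short : (#|[set B in Bs | shortf B]| * 3 = N)%N.
Proof.
set Sh := [set B in Bs | shortf B].
have h1 : \sum_(B in Sh) (#|B|%:R : int) = (#|Sh| * 3)%:R.
  rewrite (eq_bigr (fun _ => 3%:R)); first by rewrite sumr_const [RHS]natrM mulr_natl.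
  by move=> B; rewrite inE => /andP [BB _]; rewrite cardB.
have h2 : \sum_(B in Sh) (#|B|%:R : int) = N%:R.
  transitivity (\sum_(B in Sh) \sum_x (if x \in B then 1 else 0 : int)).
    by apply: eq_bigr => B _; rewrite -big_mkcond sumr_const.
  rewrite exchange_big /= (eq_bigr (fun _ => 1)); first by rewrite sumr_const card_ord.
  move=> x _; rewrite -big_mkcondr /=.
  rewrite (eq_bigl (fun B => B \in [set B in Bs | (x \in B) && shortf B])).
    by rewrite sumr_const short_pt.
  by move=> B /=; rewrite !inE; case: (B \in Bs); case: (x \in B); case: (shortf B).
by move: h1; rewrite h2 => /eqP; rewrite eqr_nat => /eqP.
Qed.

Lemma card_split (P : pred {set pt}) :
  (#|[set B in Bs | P B]| + #|[set B in Bs | ~~ P B]| = #|Bs|)%N.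
Proof.
rewrite -(cardsID [set B | P B] Bs); congr (_ + _); apply: eq_card => B; rewrite !inE //.
by rewrite andbC.
Qed.

Lemma exists_t3 (B1 : {set pt}) : B1 \in Bs -> {in B1 &, forall p q, res p = res q} ->
  exists2 B, B \in Bs & ~~ shortf B /\ {in B &, injective res}.
Proof.
move=> B1B H1.
case: (boolP [exists B in Bs, (eps B == 0) && ~~ shortf B]).
  case/existsP => B /andP [BB /andP [/eqP e ns]].
  by exists B => //; split => //; apply: eps0_inj.
move=> H; exfalso.
have ZS : [set B in Bs | eps B == 0] \subset [set B in Bs | shortf B].
  apply/subsetP => B; rewrite !inE => /andP [BB e]; rewrite BB /=.
  by move/existsPn: H => /(_ B); rewrite BB e /= negbK.
have cZ := subset_leq_card ZS.
have cS := card_short.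
have cB := countBs.
have se := sum_eps.
have cs := card_split (fun B => eps B == 0).
have ineq0 : 4 <= \sum_(B in Bs) (eps B - (if eps B == 0 then 0 else 2)).
  rewrite (bigD1 B1) //= eps6 ?cardB //.
  rewrite (_ : 4 = (6 - 2) + 0) //; apply: lerD => //.
  apply: sumr_ge0 => B _; case: eqP => [->|/eqP e]; first by rewrite subr0.
  by rewrite subr_ge0; apply: eps_nz.
have ineq : \sum_(B in Bs) eps B >=
    \sum_(B in Bs) (if eps B == 0 then 0 else 2) + 4.
  by move: ineq0; rewrite sumrB lerBrDl.
have e2 : \sum_(B in Bs) (if eps B == 0 then 0 else 2 : int)
    = (#|[set B in Bs | ~~ (eps B == 0)]| * 2)%:R.
  rewrite (eq_bigr (fun B => if ~~ (eps B == 0) then 2 else 0)); last first.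
    by move=> B _; case: (_ == _).
  rewrite -big_mkcondr (eq_bigl (fun B => B \in [set B in Bs | ~~ (eps B == 0)])).
    by rewrite sumr_const [RHS]natrM mulr_natl.
  by move=> B; rewrite inE.
rewrite se e2 in ineq.
have := Nm; have := m5.
move: ineq cZ cS cB cs.
set a := #|[set B in Bs | eps B == 0]|.
set b := #|[set B in Bs | ~~ (eps B == 0)]|.
set c := #|[set B in Bs | shortf B]|.
set d := #|Bs|.
move=> ineq; have {}ineq : (b * 2 + 4 <= N * (m - 1))%N by move: ineq; lia.
nia.
Qed.

Lemma iter_shift k (B : {set pt}) : iter k (@shift N) B = tr k%:R B.
Proof.
elim: k => [|k IH] /=; first by rewrite tr0.
by rewrite IH shift_tr trD -[k.+1]addn1 natrD.
Qed.

Lemma flow4 : exists f, zero_sum_flow 4 Bs f.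
Proof.
have n01 : (0 : pt) != 1 by rewrite eq_sym oner_eq0.
have [B' B'B /andP [b0 b1]] := sts_ex n01.
have ns : ~~ shortf B'.
  apply/negP => sB; move: b1; rewrite (short3 (cardB B'B) sB b0) !inE !add0r.
  have hm := m5; have hNm := Nm.
  have v1 : val (1 : pt) = 1%N by [].
  case/orP => [/orP [] | ] /eqP /(congr1 val); rewrite ?val_add v1 ?val_mm //.
  - by move=> e; rewrite -e in hm.
  - by rewrite modn_small; lia.
have [psi [H1 H2]] := parity (L B').
set P := \sum_(C in L B') psi C.
have hP : P = 0 \/ P = 1 by [].
exists (f B' psi (-1 - P) (-1 - P) 3); split.
  move=> B BB; case: (f_cases ns psi (-1 - P) (-1 - P) 3 BB) => [->|->|->|[C CL ->]].
  - by case: hP => ->.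
  - by case: hP => ->.
  - by [].
  - by case: (H1 C CL) => ->.
move=> x; have := S_f B'B ns psi (-1 - P) (-1 - P) 3 x; rewrite /S => ->.
rewrite (eq_bigr (fun _ => -1 - P)); last by move=> a _; rewrite /w; case: ifP.
rewrite sumr_const cardB // -/P; case: hP => ->; by [].
Qed.

Lemma flow3 B3 : B3 \in Bs -> ~~ shortf B3 -> {in B3 &, injective res} ->
  exists f, zero_sum_flow 3 Bs f.
Proof.
move=> B3B ns rinj.
have [psi [H1 H2]] := parity (L B3).
set P := \sum_(C in L B3) psi C.
have [al [be [hal [hbe hs]]]] : exists al be : int,
  [/\ al = 1 \/ al = -2, be = -1 & al + be + be + 1 + P *+ 3 = 0].
  have hP : P = 0 \/ P = 1 by [].
  case: hP => hP; [exists 1, (-1) | exists (-2), (-1)]; rewrite hP; split => //; by [left|right].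
exists (f B3 psi al be 1); split.
  move=> B BB; case: (f_cases ns psi al be 1 BB) => [->|->|->|[C CL ->]].
  - by case: hal => ->.
  - by rewrite hbe.
  - by [].
  - by case: (H1 C CL) => ->.
move=> x; have := S_f B3B ns psi al be 1 x; rewrite /S => ->.
by rewrite (sum_res B3B ns) ?cardB // -/P.
Qed.

Lemma uniq_map_inj (T1 T2 : eqType) (g : T1 -> T2) s :
  uniq (map g s) -> {in s &, injective g}.
Proof.
elim: s => // a s IH /= /andP [fa us] x y; rewrite !inE.
case/orP => [/eqP ->|xs]; case/orP => [/eqP ->|ys] // e.
- by move: fa; rewrite e (map_f g ys).
- by move: fa; rewrite -e (map_f g xs).
- exact: IH.
Qed.

Lemma ntype1 (B : {set pt}) : ntype B = 1%N -> {in B &, forall p q, res p = res q}.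
Proof.
rewrite /ntype; set s := map _ _.
have mem p : p \in B -> res p \in undup s by move=> pB; rewrite mem_undup map_f ?mem_enum.
case E : (undup s) mem => [|r [|]] // mem _ p q pB qB.
by have := mem p pB; have := mem q qB; rewrite !inE => /eqP -> /eqP ->.
Qed.

Lemma ntype3 (B : {set pt}) : #|B| = 3%N -> ntype B = 3%N -> {in B &, injective res}.
Proof.
rewrite /ntype cardE => cB nt p q pB qB.
have u : uniq (map res (enum B)).
  by apply/negPn; rewrite -ltn_size_undup size_map cB; apply/negP; rewrite -/res nt ltnn.
by apply: (uniq_map_inj u); rewrite mem_enum.
Qed.

Lemma orbit_ns (B : {set pt}) : B \in Bs -> #|block_orbit B| = N -> ~~ shortf B.
Proof.
move=> BB cO; apply/negP => /existsP [t /andP [t0 /eqP E]].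
have : #|block_orbit B| == #|'I_N| by rewrite cO card_ord.
move/imset_injP => inj.
have : t = ord0.
  apply: inj => //; rewrite /= !iter_shift natr_Zp E.
  by [].
by move=> et; move: t0; rewrite et.
Qed.

Lemma in_orbit (B : {set pt}) : B \in block_orbit B.
Proof. by apply/imsetP; exists ord0. Qed.

End Gen.

Theorem mainTheorem6 (v : nat) (Bs : {set {set 'I_v}}) :
  (3 < v)%N -> (v %% 18 = 3 \/ v %% 18 = 15)%N ->
  is_STS Bs -> is_cyclic Bs ->
  (exists f, zero_sum_flow 4 Bs f) /\
  ((exists B, [/\ B \in Bs, #|block_orbit B| = v &
                  orbit_of_type B 1 \/ orbit_of_type B 3]) ->
   exists f, zero_sum_flow 3 Bs f).
Proof.
case: v Bs => [|[|n]] Bs h3 // h18 sts cyc; split; first exact: flow4.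
case=> B [BB cO [T1|T3]].
- have := ntype1 (T1 _ (in_orbit B)) => hr.
  have [B3 B3B [ns rinj]] := exists_t3 sts cyc h18 h3 BB hr.
  exact: (flow3 sts cyc h18 h3 B3B ns rinj).
- have ns := orbit_ns BB cO.
  have rinj := ntype3 (cardB sts BB) (T3 _ (in_orbit B)).
  exact: (flow3 sts cyc h18 h3 BB ns rinj).
Qed.
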